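(* Let $(\mathcal G,\lambda)$ be a small morphism-colored groupoid satisfying the inverse-compatibility condition. For $f,g\in\mathrm{Mor}(\mathcal G)$ with $(s_0\circ\lambda_0)(\mathrm{source}(f))=(s_0\circ\lambda_0)(\mathrm{target}(g))$, there exists a composable pair $(f',g')$ of morphisms of $\mathcal G$ (i.e. $\mathrm{source}(f')=\mathrm{target}(g')$) such that $(s_1\circ\lambda_1)(f)=(s_1\circ\lambda_1)(f')$ and $(s_1\circ\lambda_1)(g)=(s_1\circ\lambda_1)(g')$.
   Context: A morphism-colored category is a pair $(\mathcal C,\lambda)$ where $\mathcal C$ is a category and $\lambda$ assigns to each morphism $f$ a color $\lambda(f)$, such that: whenever $g,f_1,f_2$ with $(f_1,f_2)$ composable satisfy $\lambda(g)=\lambda(f_1\circ f_2)$, there exist composable $g_1,g_2$ with $g=g_1\circ g_2$, $\lambda(g_1)=\lambda(f_1)$, $\lambda(g_2)=\lambda(f_2)$. It is a morphism-colored groupoid if $\mathcal C$ is a groupoid, and small if $\mathcal C$ is small and $\lambda$ is a map into a set. Inverse-compatibility: $\lambda(f)=\lambda(g)$ implies $\lambda(f^{-1})=\lambda(g^{-1})$. $I_1=\lambda(\mathrm{Mor}(\mathcal G))$, $\lambda_1$ the corestriction of $\lambda$ to $I_1$; $I_0=\{\lambda(\mathrm{id}_x):x\in\mathrm{Obj}(\mathcal G)\}$, $\lambda_0(x)=\lambda(\mathrm{id}_x)$. The equivalence relation $\overset{1}{\sim}$ on $I_1$: $\lambda(f_1\circ\cdots\circ f_l)\overset{1}{\sim}\lambda(g_1\circ\cdots\circ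 g_l)$ for every $l\ge1$ and all composable sequences with $\lambda(f_i)=\lambda(g_i)$ for all $i$ (no other pairs); $s_1:I_1\to\bar I_1$ the quotient map. The equivalence relation $\overset{0}{\sim}$ on $I_0$: $\lambda_0(\mathrm{source}(f))\overset{0}{\sim}\lambda_0(\mathrm{source}(g))$ whenever $(s_1\circ\lambda_1)(f)=(s_1\circ\lambda_1)(g)$; $s_0:I_0\to\bar I_0$ the quotient map onto its classes. *)

(* Defs.v *)
From Stdlib Require Import List Relations.
Import ListNotations.

(* A small groupoid: object and morphism types, source/target, identities,
   composition (total function, meaningful only on composable pairs
   (f, g) with src f = tgt g, giving f o g), inverses. *)
Record Groupoid := {
  Obj : Type;
  Mor : Type;
  src : Mor -> Obj;
  tgt : Mor -> Obj;
  idm : Obj -> Mor;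
  comp : Mor -> Mor -> Mor;
  inv : Mor -> Mor;
  src_idm : forall x, src (idm x) = x;
  tgt_idm : forall x, tgt (idm x) = x;
  src_comp : forall f g, src f = tgt g -> src (comp f g) = src g;
  tgt_comp : forall f g, src f = tgt g -> tgt (comp f g) = tgt f;
  comp_idr : forall f, comp f (idm (src f)) = f;
  comp_idl : forall f, comp (idm (tgt f)) f = f;
  comp_assoc : forall f g h, src f = tgt g -> src g = tgt h ->
      comp f (comp g h) = comp (comp f g) h;
  src_inv : forall f, src (inv f) = tgt f;
  tgt_inv : forall f, tgt (inv f) = src f;
  comp_inv_r : forall f, comp f (inv f) = idm (tgt f);
  comp_inv_l : forall f, comp (inv f) f = idm (src f)
}.

Arguments src {G0} _ : rename.
Arguments tgt {G0} _ : rename.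
Arguments idm {G0} _ : rename.
Arguments comp {G0} _ _ : rename.
Arguments inv {G0} _ : rename.

Section Colored.
Variable G : Groupoid.
Variable I : Type.
Variable lam : Mor G -> I.

Definition morphism_colored : Prop :=
  forall g f1 f2 : Mor G, src f1 = tgt f2 -> lam g = lam (comp f1 f2) ->
    exists g1 g2, src g1 = tgt g2 /\ g = comp g1 g2 /\
                  lam g1 = lam f1 /\ lam g2 = lam f2.

Definition inverse_compatible : Prop :=
  forall f g : Mor G, lam f = lam g -> lam (inv f) = lam (inv g).

(* A nonempty sequence f :: fs = (f_1, ..., f_l), composable,
   and its composite f_1 o ... o f_l. *)
Fixpoint composable (f : Mor G) (fs : list (Mor G)) : Prop :=
  match fs with
  | [] => True
  | h :: t => src f = tgt h /\ composable h t
  end.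

Fixpoint compose_seq (f : Mor G) (fs : list (Mor G)) : Mor G :=
  match fs with
  | [] => f
  | h :: t => comp f (compose_seq h t)
  end.

Definition rel1 (a b : I) : Prop :=
  exists f fs g gs,
    composable f fs /\ composable g gs /\
    Forall2 (fun x y => lam x = lam y) (f :: fs) (g :: gs) /\
    a = lam (compose_seq f fs) /\ b = lam (compose_seq g gs).

(* Equality after the quotient map s1 (classes of the equivalence relation
   ~1; we take the generated equivalence, which coincides with ~1 since the
   paper asserts ~1 is an equivalence relation). *)
Definition s1_eq (a b : I) : Prop := clos_refl_sym_trans I rel1 a b.

(* Generating pairs of ~0 on I0 = colors of identities. *)
Definition rel0 (a b : I) : Prop :=
  exists f g : Mor G, s1_eq (lam f) (lam g) /\
    a = lam (idm (src f)) /\ b = lam (idm (src g)).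

Definition s0_eq (a b : I) : Prop := clos_refl_sym_trans I rel0 a b.

End Colored.

(* Main.v *)
Require Import Defs.
From Stdlib Require Import List Relations.
Import ListNotations.

Section Pf.
Variable G : Groupoid.
Variable I : Type.
Variable lam : Mor G -> I.
Hypothesis Hcol : morphism_colored G I lam.
Hypothesis Hinv : inverse_compatible G I lam.

Lemma inv_inv (h : Mor G) : inv (inv h) = h.
Proof.
  rewrite <- (comp_idr _ (inv (inv h))).
  rewrite (src_inv _ (inv h)), (tgt_inv _ h).
  rewrite <- (comp_inv_l _ h).
  rewrite (comp_assoc _ (inv (inv h)) (inv h) h).
  - rewrite comp_inv_l, src_inv. apply comp_idl.
  - rewrite src_inv, tgt_inv. reflexivity.
  - rewrite src_inv. reflexivity.
Qed.

Lemma L (p q h : Mor G) : tgt h = src q -> lam p = lam q ->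
  exists h', tgt h' = src p /\ lam h' = lam h.
Proof.
  intros Hh Hpq.
  assert (Eq : q = comp (comp q h) (inv h)).
  { rewrite <- comp_assoc.
    - rewrite comp_inv_r, Hh. symmetry. apply comp_idr.
    - auto.
    - rewrite tgt_inv. reflexivity. }
  destruct (Hcol p (comp q h) (inv h)) as [a [b [Hab [Hp [_ Hb]]]]].
  - rewrite src_comp by auto. rewrite tgt_inv. reflexivity.
  - rewrite <- Eq. exact Hpq.
  - exists (inv b). split.
    + rewrite tgt_inv, Hp. rewrite src_comp by auto. reflexivity.
    + rewrite (Hinv _ _ Hb), inv_inv. reflexivity.
Qed.

Lemma tgt_cs f fs : composable G f fs -> tgt (compose_seq G f fs) = tgt f.
Proof.
  revert f; induction fs as [|f2 fs IH]; intros f Hc; simpl in *; auto.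
  destruct Hc as [H1 H2]. apply tgt_comp. rewrite IH; auto.
Qed.

Lemma src_cs f f2 fs : composable G f (f2 :: fs) ->
  src (compose_seq G f (f2 :: fs)) = src (compose_seq G f2 fs).
Proof.
  intros [H1 H2]. simpl. apply src_comp. rewrite tgt_cs; auto.
Qed.

Lemma M : forall fs f g gs, composable G f fs -> composable G g gs ->
  Forall2 (fun x y => lam x = lam y) (f :: fs) (g :: gs) ->
  forall h, tgt h = src (compose_seq G f fs) ->
  exists h', tgt h' = src (compose_seq G g gs) /\ lam h' = lam h.
Proof.
  induction fs as [|f2 fs IH]; intros f g gs Hf Hg HF h Hh.
  - inversion HF; subst. inversion H4; subst. simpl in *.
    apply (L g f h); auto.
  - inversion HF; subst. inversion H4; subst.
    rewrite (src_cs _ _ _ Hf) in Hh. rewrite (src_cs _ _ _ Hg).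
    destruct Hf, Hg. eapply IH; eauto.
Qed.

Lemma Forall2_sym (l1 l2 : list (Mor G)) :
  Forall2 (fun x y => lam x = lam y) l1 l2 -> Forall2 (fun x y => lam x = lam y) l2 l1.
Proof. induction 1; constructor; auto. Qed.

Lemma rel1_step a b : rel1 G I lam a b -> forall p m h, lam p = a -> lam m = b ->
  tgt h = src p -> exists h', tgt h' = src m /\ lam h' = lam h.
Proof.
  intros [f [fs [g [gs [Hf [Hg [HF [Ha Hb]]]]]]]] p m h Hp Hm Hh.
  destruct (L (compose_seq G f fs) p h) as [h1 [H1 E1]]; try congruence.
  destruct (M fs f g gs Hf Hg HF h1 H1) as [h2 [H2 E2]].
  destruct (L m (compose_seq G g gs) h2) as [h3 [H3 E3]]; try congruence.
  exists h3; split; congruence.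
Qed.

Lemma rel1_wit a b : rel1 G I lam a b -> (exists m, lam m = a) /\ (exists m, lam m = b).
Proof.
  intros [f [fs [g [gs [_ [_ [_ [Ha Hb]]]]]]]]. split; eauto.
Qed.

Lemma rel1_sym a b : rel1 G I lam a b -> rel1 G I lam b a.
Proof.
  intros [f [fs [g [gs [Hf [Hg [HF [Ha Hb]]]]]]]].
  exists g, gs, f, fs. repeat split; auto. apply Forall2_sym; auto.
Qed.

Lemma N a b : clos_refl_sym_trans_1n I (rel1 G I lam) a b ->
  forall p q h, lam p = a -> lam q = b -> tgt h = src p ->
  exists h', tgt h' = src q /\ lam h' = lam h.
Proof.
  induction 1 as [a|a c b Hs Hr IH]; intros p q h Hp Hq Hh.
  - apply (L q p h); congruence.
  - assert (Hr' : rel1 G I lam a c) by (destruct Hs; auto using rel1_sym).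
    destruct (rel1_wit _ _ Hr') as [_ [m Hm]].
    destruct (rel1_step a c Hr' p m h Hp Hm Hh) as [h1 [H1 E1]].
    destruct (IH m q h1 Hm Hq H1) as [h2 [H2 E2]].
    exists h2; split; congruence.
Qed.

Lemma N' a b : s1_eq G I lam a b ->
  forall p q h, lam p = a -> lam q = b -> tgt h = src p ->
  exists h', tgt h' = src q /\ lam h' = lam h.
Proof. intro H. apply N. apply clos_rst_rst1n. exact H. Qed.

Lemma ID x y h : lam (idm x) = lam (idm y) -> tgt h = x ->
  exists h', tgt h' = y /\ lam h' = lam h.
Proof.
  intros E Hh. destruct (L (idm y) (idm x) h) as [h' [H1 H2]].
  - rewrite src_idm; auto.
  - auto.
  - exists h'. rewrite src_idm in H1. auto.
Qed.

Lemma rel0_step a c : rel0 G I lam a c -> forall x z h,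
  lam (idm x) = a -> lam (idm z) = c -> tgt h = x ->
  exists h', tgt h' = z /\ lam h' = lam h.
Proof.
  intros [f0 [g0 [Hs [Ha Hc]]]] x z h Hx Hz Hh.
  destruct (ID x (src f0) h) as [h1 [H1 E1]]; try congruence.
  destruct (N' _ _ Hs f0 g0 h1 eq_refl eq_refl H1) as [h2 [H2 E2]].
  destruct (ID (src g0) z h2) as [h3 [H3 E3]]; try congruence.
  exists h3; split; congruence.
Qed.

Lemma rel0_sym a c : rel0 G I lam a c -> rel0 G I lam c a.
Proof.
  intros [f0 [g0 [Hs [Ha Hc]]]]. exists g0, f0. repeat split; auto.
  apply rst_sym. auto.
Qed.

Lemma S a b : clos_refl_sym_trans_1n I (rel0 G I lam) a b ->
  forall x y h, lam (idm x) = a -> lam (idm y) = b -> tgt h = x ->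
  exists h', tgt h' = y /\ lam h' = lam h.
Proof.
  induction 1 as [a|a c b Hs Hr IH]; intros x y h Hx Hy Hh.
  - apply (ID x y h); congruence.
  - assert (Hr' : rel0 G I lam a c) by (destruct Hs; auto using rel0_sym).
    destruct Hr' as [f0 [g0 [Hs0 [Ha Hc]]]] eqn:E.
    destruct (rel0_step a c Hr' x (src g0) h Hx (eq_sym Hc) Hh) as [h1 [H1 E1]].
    destruct (IH (src g0) y h1 (eq_sym Hc) Hy H1) as [h2 [H2 E2]].
    exists h2; split; congruence.
Qed.

End Pf.

Theorem proposition3p10 (G : Groupoid) (I : Type) (lam : Mor G -> I)
  (Hcol : morphism_colored G I lam) (Hinv : inverse_compatible G I lam)
  (f g : Mor G)
  (Hfg : s0_eq G I lam (lam (idm (src f))) (lam (idm (tgt g)))) :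
  exists f' g' : Mor G, src f' = tgt g' /\
    s1_eq G I lam (lam f) (lam f') /\ s1_eq G I lam (lam g) (lam g').
Proof.
  assert (H := clos_rst_rst1n _ _ _ _ (rst_sym _ _ _ _ Hfg)).
  destruct (S G I lam Hcol Hinv _ _ H (tgt g) (src f) g eq_refl eq_refl eq_refl)
    as [g' [H1 E1]].
  exists f, g'. split; [auto|]. split; [apply rst_refl|].
  rewrite E1. apply rst_refl.
Qed.
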